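(* Assume $J$ satisfies (J1), (J2), (J5) and (JP), and $h\equiv0$. Let $u$ be a minimizer for $H$ in $Q_\ell(q)$ for some $q\in\mathbb Z^d$ and $\ell\in\mathbb N$. If $q\in\partial u$, then $$\min\Big\{\#\big(\{u=-1\}\cap Q_\ell(q)\big),\ \#\big(\{u=1\}\cap Q_\ell(q)\big)\Big\}\ge\bar c\,\ell^d,$$ for a constant $\bar c>0$ depending only on $d$, $s$, $\lambda$ and $\Lambda$.
   Context: Fix $d\ge2$, $|x|:=\sum_n|x_n|$ ($\ell^1$ norm), $|x|_\infty:=\max_n|x_n|$. Configurations are maps $u:\mathbb Z^d\to\{-1,1\}$; $\partial u:=\{i: u_i=1\text{ and }\exists j,\ |i-j|=1,\ u_j=-1\}$; $\{u=\pm1\}:=\{i\in\mathbb Z^d:u_i=\pm1\}$. With $h\equiv0$, for finite $\Gamma$: $H_\Gamma(u):=\sum_{(i,j)\in\mathbb Z^{2d}\setminus(\mathbb Z^d\setminus\Gamma)^2}J_{ij}(1-u_iu_j)$; $u$ is a minimizer for $H$ in $\Gamma$ if $H_\Gamma(u)\le H_\Gamma(v)$ for all $v$ agreeing with $u$ outside $\Gamma$. $Q_\ell(q):=\{i\in\mathbb Z^d:|i-q|_\infty\le\ell\}$. Conditions on $J:\mathbb Z^d\times\mathbb Z^d\to[0,\infty)$: (J1) $J_{ij}=J_{ji}$; (J2) $J_{ii}=0$; (J5) $J_{ij}=J_{i'j'}$ whenever $i-i'=j-j'\in\tau\mathbb Z^d$, for some $\tau\in\mathbb N$; (JP) $\lambda|i-j|^{-d-s}\le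 J_{ij}\le\Lambda|i-j|^{-d-s}$ for all $i\ne j$, for some $s\in(0,1)$, $\Lambda\ge\lambda>0$. *)

(* Defs.v *)
From Stdlib Require Import Reals Lra Lia ZArith Arith List.
Import ListNotations.
Open Scope R_scope.

(** Points of Z^d: integer sequences vanishing from index d on. *)
Record pt (d : nat) := Pt { coord : nat -> Z ; coord_supp : forall n, (d <= n)%nat -> coord n = 0%Z }.
Arguments coord {d} _ _.

Definition dist1 {d} (i j : pt d) : Z :=
  fold_right Z.add 0%Z (map (fun n => Z.abs (coord i n - coord j n)) (seq 0 d)).

Definition distinf {d} (i j : pt d) : Z :=
  fold_right Z.max 0%Z (map (fun n => Z.abs (coord i n - coord j n)) (seq 0 d)).

Definition cube {d} (l : nat) (q : pt d) (i : pt d) : Prop := (distinf i q <= Z.of_nat l)%Z.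

Definition config {d} (u : pt d -> Z) : Prop := forall i, u i = 1%Z \/ u i = (-1)%Z.

Definition in_boundary {d} (u : pt d -> Z) (i : pt d) : Prop :=
  u i = 1%Z /\ exists j, dist1 i j = 1%Z /\ u j = (-1)%Z.

(** The (nonnegative) summand of H_Gamma, indexed by pairs (i,j) not both outside Gamma. *)
Definition Hterm {d} (J : pt d -> pt d -> R) (u : pt d -> Z) (p : pt d * pt d) : R :=
  J (fst p) (snd p) * (1 - IZR (u (fst p) * u (snd p))).

Definition Hindex {d} (Gam : pt d -> Prop) (p : pt d * pt d) : Prop :=
  Gam (fst p) \/ Gam (snd p).

(** S is the value of H_Gamma(u): the supremum of all finite partial sums
    over distinct index pairs (the series has nonnegative terms). *)
Definition H_value {d} (J : pt d -> pt d -> R) (Gam : pt d -> Prop) (u : pt d -> Z) (S : R) : Prop :=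
  is_lub (fun x => exists l : list (pt d * pt d),
             NoDup l /\ Forall (Hindex Gam) l /\
             x = fold_right Rplus 0 (map (Hterm J u) l)) S.

(** u is a minimizer for H in Gamma: H_Gamma(u) is finite and
    H_Gamma(u) <= H_Gamma(v) for every configuration v agreeing with u outside Gamma
    (v with H_Gamma(v) = +oo, i.e. without a finite value, satisfy this trivially). *)
Definition minimizer {d} (J : pt d -> pt d -> R) (Gam : pt d -> Prop) (u : pt d -> Z) : Prop :=
  exists Su, H_value J Gam u Su /\
    forall v : pt d -> Z, config v -> (forall i, ~ Gam i -> v i = u i) ->
      forall Sv, H_value J Gam v Sv -> Su <= Sv.

Definition card_is {d} (P : pt d -> Prop) (n : nat) : Prop :=
  exists l : list (pt d), NoDup l /\ (forall x, In x l <-> P x) /\ length l = n.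

Definition J_nonneg {d} (J : pt d -> pt d -> R) := forall i j, 0 <= J i j.
Definition J1 {d} (J : pt d -> pt d -> R) := forall i j, J i j = J j i.
Definition J2 {d} (J : pt d -> pt d -> R) := forall i, J i i = 0.
Definition J5 {d} (J : pt d -> pt d -> R) :=
  exists tau : nat, (1 <= tau)%nat /\
    forall i i' j j' : pt d,
      (forall n, (coord i n - coord i' n = coord j n - coord j' n)%Z /\
                 (Z.of_nat tau | coord i n - coord i' n)%Z) ->
      J i j = J i' j'.
Definition JP {d} (J : pt d -> pt d -> R) (s lam Lam : R) :=
  forall i j : pt d, i <> j ->
    lam * Rpower (IZR (dist1 i j)) (- (INR d + s)) <= J i j /\
    J i j <= Lam * Rpower (IZR (dist1 i j)) (- (INR d + s)).

(* Main.v *)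
Require Import Defs.
From Stdlib Require Import Reals Lra Lia ZArith Arith List FunctionalExtensionality ProofIrrelevance.
Import ListNotations.
Open Scope R_scope.

Definition sumR {A} (f : A -> R) (l : list A) : R := fold_right Rplus 0 (map f l).

Lemma sumR_nil {A} (f : A -> R) : sumR f [] = 0.
Proof. reflexivity. Qed.
Lemma sumR_cons {A} (f : A -> R) a l : sumR f (a :: l) = f a + sumR f l.
Proof. reflexivity. Qed.

Lemma sumR_app {A} (f : A -> R) l1 l2 : sumR f (l1 ++ l2) = sumR f l1 + sumR f l2.
Proof. induction l1; simpl; unfold sumR in *; simpl; try rewrite IHl1; lra. Qed.

Lemma sumR_filter {A} (f : A -> R) (p : A -> bool) l :
  sumR f l = sumR f (filter p l) + sumR f (filter (fun x => negb (p x)) l).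
Proof.
  induction l as [|a l IH]; simpl. unfold sumR; simpl; lra.
  destruct (p a); simpl; rewrite !sumR_cons, IH; lra.
Qed.

Lemma sumR_nonneg {A} (f : A -> R) l : (forall x, In x l -> 0 <= f x) -> 0 <= sumR f l.
Proof.
  induction l as [|a l IH]; intros H; simpl. unfold sumR; simpl; lra.
  rewrite sumR_cons. assert (0 <= f a) by (apply H; simpl; auto).
  assert (0 <= sumR f l) by (apply IH; intros; apply H; simpl; auto). lra.
Qed.

Lemma sumR_le {A} (f g : A -> R) l : (forall x, In x l -> f x <= g x) -> sumR f l <= sumR g l.
Proof.
  induction l as [|a l IH]; intros H. unfold sumR; simpl; lra.
  rewrite !sumR_cons. assert (f a <= g a) by (apply H; simpl; auto).
  assert (sumR f l <= sumR g l) by (apply IH; intros; apply H; simpl; auto). lra.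
Qed.

Lemma sumR_ext {A} (f g : A -> R) l : (forall x, In x l -> f x = g x) -> sumR f l = sumR g l.
Proof.
  intros H. apply Rle_antisym; apply sumR_le; intros x Hx; rewrite (H x Hx); lra.
Qed.

Lemma sumR_const_le {A} (f : A -> R) l c : (forall x, In x l -> f x <= c) -> sumR f l <= INR (length l) * c.
Proof.
  induction l as [|a l IH]; intros H. unfold sumR; simpl; lra.
  rewrite sumR_cons. simpl length. rewrite S_INR.
  assert (f a <= c) by (apply H; simpl; auto).
  assert (sumR f l <= INR (length l) * c) by (apply IH; intros; apply H; simpl; auto). lra.
Qed.

Lemma sumR_const_ge {A} (f : A -> R) l c : (forall x, In x l -> c <= f x) -> INR (length l) * c <= sumR f l.
Proof.
  induction l as [|a l IH]; intros H. unfold sumR; simpl; lra.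
  rewrite sumR_cons. simpl length. rewrite S_INR.
  assert (c <= f a) by (apply H; simpl; auto).
  assert (INR (length l) * c <= sumR f l) by (apply IH; intros; apply H; simpl; auto). lra.
Qed.

Lemma sumR_scal {A} (f : A -> R) l c : sumR (fun x => c * f x) l = c * sumR f l.
Proof. induction l; unfold sumR in *; simpl; try rewrite IHl; lra. Qed.

Lemma sumR_plus {A} (f g : A -> R) l : sumR (fun x => f x + g x) l = sumR f l + sumR g l.
Proof. induction l; unfold sumR in *; simpl; try rewrite IHl; lra. Qed.

Lemma sumR_sub {A} (f : A -> R) (l1 l2 : list A) :
  NoDup l1 -> incl l1 l2 -> (forall x, In x l2 -> 0 <= f x) -> sumR f l1 <= sumR f l2.
Proof.
  revert l2. induction l1 as [|a l1 IH]; intros l2 Hnd Hinc Hpos.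
  - rewrite sumR_nil. apply sumR_nonneg; auto.
  - inversion Hnd; subst.
    assert (Ha : In a l2) by (apply Hinc; simpl; auto).
    destruct (in_split _ _ Ha) as [x [y Hxy]]. subst l2.
    rewrite sumR_cons, sumR_app, sumR_cons.
    assert (sumR f l1 <= sumR f (x ++ y)).
    { apply IH; auto.
      - intros b Hb. assert (In b (x ++ a :: y)) by (apply Hinc; simpl; auto).
        apply in_app_or in H. apply in_or_app. destruct H as [H|[H|H]]; auto.
        subst; contradiction.
      - intros z Hz. apply Hpos. apply in_app_or in Hz. apply in_or_app. simpl. tauto. }
    rewrite sumR_app in H. lra.
Qed.

Lemma sumR_exchange {A B} (F : A -> B -> R) l1 l2 :
  sumR (fun i => sumR (fun j => F i j) l2) l1 = sumR (fun j => sumR (fun i => F i j) l1) l2.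
Proof.
  induction l1 as [|a l1 IH].
  - rewrite sumR_nil. symmetry. transitivity (sumR (fun _ : B => 0 * 1) l2).
    apply sumR_ext. intros. rewrite sumR_nil. lra.
    rewrite (sumR_scal (fun _ => 1) l2 0). lra.
  - rewrite sumR_cons, IH.
    rewrite <- sumR_plus. apply sumR_ext. intros. rewrite sumR_cons. lra.
Qed.

Lemma sumR_prod {A B} (F : A * B -> R) l1 l2 :
  sumR F (list_prod l1 l2) = sumR (fun i => sumR (fun j => F (i, j)) l2) l1.
Proof.
  induction l1 as [|a l1 IH]; simpl. reflexivity.
  rewrite sumR_app, IH, sumR_cons. f_equal.
  clear IH. induction l2 as [|b l2 IH2]; simpl. reflexivity.
  rewrite !sumR_cons, IH2. reflexivity.
Qed.
Open Scope Z_scope.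

Lemma pt_ext {d} (i j : pt d) : (forall n, (n < d)%nat -> coord i n = coord j n) -> i = j.
Proof.
  destruct i as [ci hi], j as [cj hj]; simpl; intros H.
  assert (ci = cj).
  { apply functional_extensionality; intros n.
    destruct (Nat.lt_ge_cases n d) as [h|h]; [apply H; auto| rewrite hi, hj; auto]. }
  subst cj. f_equal. apply proof_irrelevance.
Qed.

Lemma all_dec (P : nat -> Prop) (Pd : forall n, {P n} + {~ P n}) k :
  {forall n, (n < k)%nat -> P n} + {~ forall n, (n < k)%nat -> P n}.
Proof.
  induction k as [|k IH].
  - left; intros; lia.
  - destruct IH as [IH|IH].
    + destruct (Pd k) as [h|h].
      * left; intros n hn. destruct (Nat.eq_dec n k); [subst; auto| apply IH; lia].
      * right; intros H; apply h, H; lia.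
    + right; intros H; apply IH; intros; apply H; lia.
Defined.

Definition pt_eq_dec {d} (i j : pt d) : {i = j} + {i <> j}.
Proof.
  destruct (all_dec (fun n => coord i n = coord j n) (fun n => Z.eq_dec _ _) d) as [h|h].
  - left; apply pt_ext; auto.
  - right; intros e; subst; apply h; auto.
Defined.

Program Definition mk (d : nat) (f : nat -> Z) : pt d :=
  Pt d (fun n => if Nat.ltb n d then f n else 0) _.
Next Obligation. destruct (Nat.ltb_spec n d); auto; lia. Qed.

Lemma mk_coord d f n : (n < d)%nat -> coord (mk d f) n = f n.
Proof. intros h; simpl. destruct (Nat.ltb_spec n d); auto; lia. Qed.

Lemma fmax_ge0 {A} (f : A -> Z) L : 0 <= fold_right Z.max 0 (map f L).
Proof. induction L; simpl; lia. Qed.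

Lemma fmax_ge {A} (f : A -> Z) L x : In x L -> f x <= fold_right Z.max 0 (map f L).
Proof. induction L; simpl; intros H; [contradiction|]. destruct H as [h|h]; subst; try lia. specialize (IHL h); lia. Qed.

Lemma fmax_le {A} (f : A -> Z) L R : 0 <= R -> (forall x, In x L -> f x <= R) ->
  fold_right Z.max 0 (map f L) <= R.
Proof.
  induction L; simpl; intros h H; auto.
  assert (f a <= R) by auto. assert (fold_right Z.max 0 (map f L) <= R) by auto. lia.
Qed.

Lemma fsum_ge {A} (f : A -> Z) L x : (forall y, In y L -> 0 <= f y) -> In x L ->
  f x <= fold_right Z.add 0 (map f L).
Proof.
  induction L; simpl; intros hp H; [contradiction|]. destruct H as [h|h]; subst.
  - assert (0 <= fold_right Z.add 0 (map f L)).
    { clear IHL. induction L; simpl; auto; try lia.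
      assert (0 <= f a) by (apply hp; simpl; auto). 
      assert (0 <= fold_right Z.add 0 (map f L)) by (apply IHL; intros; apply hp; simpl in *; tauto). lia. }
    lia.
  - assert (0 <= f a) by auto. assert (f x <= fold_right Z.add 0 (map f L)) by auto. lia.
Qed.

Lemma fsum_le {A} (f : A -> Z) L R : (forall y, In y L -> f y <= R) ->
  fold_right Z.add 0 (map f L) <= Z.of_nat (length L) * R.
Proof.
  induction L; intros h. simpl; lia.
  assert (f a <= R) by (apply h; simpl; auto).
  assert (fold_right Z.add 0 (map f L) <= Z.of_nat (length L) * R) by (apply IHL; intros; apply h; simpl; auto).
  change (f a + fold_right Z.add 0 (map f L) <= Z.of_nat (S (length L)) * R).
  rewrite Nat2Z.inj_succ, Z.mul_succ_l. lia.
Qed.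

Lemma distinf_sym {d} (i j : pt d) : distinf i j = distinf j i.
Proof.
  unfold distinf. f_equal. apply map_ext. intros; rewrite <- Z.abs_opp; f_equal; lia.
Qed.

Lemma distinf_ge0 {d} (i j : pt d) : 0 <= distinf i j.
Proof. apply fmax_ge0. Qed.

Lemma distinf_le_iff {d} (i j : pt d) R : 0 <= R ->
  (distinf i j <= R <-> forall n, (n < d)%nat -> Z.abs (coord i n - coord j n) <= R).
Proof.
  intros hR; split.
  - intros h n hn. eapply Z.le_trans; [|apply h]. unfold distinf.
    apply (fmax_ge (fun n => Z.abs (coord i n - coord j n))). apply in_seq; lia.
  - intros h. apply fmax_le; auto. intros x hx. apply in_seq in hx. apply h; lia.
Qed.

Lemma coord_le_distinf {d} (i j : pt d) n : Z.abs (coord i n - coord j n) <= distinf i j.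
Proof.
  destruct (Nat.lt_ge_cases n d) as [h|h].
  - apply (fmax_ge (fun n => Z.abs (coord i n - coord j n))). apply in_seq; lia.
  - rewrite !coord_supp by auto. simpl. apply distinf_ge0.
Qed.

Lemma distinf_tri {d} (i j k : pt d) : distinf i k <= distinf i j + distinf j k.
Proof.
  apply distinf_le_iff. pose proof (distinf_ge0 i j); pose proof (distinf_ge0 j k); lia.
  intros n _. pose proof (coord_le_distinf i j n); pose proof (coord_le_distinf j k n). lia.
Qed.

Lemma distinf_le_dist1 {d} (i j : pt d) : distinf i j <= dist1 i j.
Proof.
  apply fmax_le. unfold dist1. clear. induction (seq 0 d) as [|a L IH]; simpl; try lia.
  intros x hx. unfold dist1. apply (fsum_ge (fun n => Z.abs (coord i n - coord j n))); auto.
  intros; apply Z.abs_nonneg.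
Qed.

Lemma dist1_le {d} (i j : pt d) : dist1 i j <= Z.of_nat d * distinf i j.
Proof.
  unfold dist1. rewrite <- (length_seq d 0) at 2. apply fsum_le.
  intros y hy. apply coord_le_distinf.
Qed.

Lemma distinf_pos {d} (i j : pt d) : i <> j -> 1 <= distinf i j.
Proof.
  intros h. destruct (Z.le_gt_cases 1 (distinf i j)) as [|h2]; auto.
  exfalso; apply h. apply pt_ext. intros n hn.
  pose proof (coord_le_distinf i j n). lia.
Qed.

Lemma distinf_self {d} (i : pt d) : distinf i i = 0.
Proof.
  pose proof (distinf_ge0 i i). assert (distinf i i <= 0); [|lia].
  apply distinf_le_iff; lia.
Qed.
Open Scope Z_scope.

Lemma NoDup_flat_map' {A B} (g : A -> list B) l :
  NoDup l -> (forall x, In x l -> NoDup (g x)) ->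
  (forall x y b, In x l -> In y l -> In b (g x) -> In b (g y) -> x = y) ->
  NoDup (flat_map g l).
Proof.
  induction l as [|a l IH]; intros hl hg hd; simpl. constructor.
  inversion hl; subst. apply NoDup_app; auto.
  - apply hg; simpl; auto.
  - apply IH; auto. intros; apply hg; simpl; auto. intros; eapply hd; simpl; eauto.
  - intros b hb hb2. apply in_flat_map in hb2. destruct hb2 as [y [hy hy2]].
    assert (a = y) by (eapply hd; simpl; eauto). subst; contradiction.
Qed.

Definition zr (R : nat) : list Z := map (fun t => Z.of_nat t - Z.of_nat R) (seq 0 (2*R+1)).

Lemma zr_in R z : In z (zr R) <-> - Z.of_nat R <= z <= Z.of_nat R.
Proof.
  unfold zr. rewrite in_map_iff. split.
  - intros [t [<- ht]]. apply in_seq in ht. lia.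
  - intros h. exists (Z.to_nat (z + Z.of_nat R)). split. lia. apply in_seq. lia.
Qed.

Lemma zr_nodup R : NoDup (zr R).
Proof.
  unfold zr. apply NoDup_map_NoDup_ForallPairs. intros x y _ _ h; lia. apply seq_NoDup.
Qed.

Lemma zr_len R : length (zr R) = (2*R+1)%nat.
Proof. unfold zr. rewrite length_map, length_seq. reflexivity. Qed.

Definition upd (f : nat -> Z) (k : nat) (z : Z) : nat -> Z :=
  fun n => if Nat.eqb n k then z else f n.

Section Box.
Context {d : nat} (c : pt d) (R : nat).

Fixpoint box (k : nat) : list (nat -> Z) :=
  match k with
  | O => [fun _ => 0]
  | S k => flat_map (fun f => map (fun a => upd f k (coord c k + a)) (zr R)) (box k)
  end.

Lemma length_flat_map_const {A B} (g : A -> list B) l m :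
  (forall x, In x l -> length (g x) = m) -> length (flat_map g l) = (length l * m)%nat.
Proof.
  induction l; simpl; intros h; auto. rewrite length_app, h, IHl; auto.
Qed.

Lemma box_len k : length (box k) = ((2*R+1)^k)%nat.
Proof.
  induction k; simpl; auto. rewrite (length_flat_map_const _ _ (2*R+1)).
  rewrite IHk, Nat.mul_comm; reflexivity. intros. rewrite length_map. apply zr_len.
Qed.

Lemma box_in k f : In f (box k) ->
  (forall n, (k <= n)%nat -> f n = 0) /\ (forall n, (n < k)%nat -> Z.abs (f n - coord c n) <= Z.of_nat R).
Proof.
  revert f; induction k; simpl; intros f hf.
  - destruct hf as [<-|[]]. split; intros; auto; lia.
  - apply in_flat_map in hf. destruct hf as [g [hg hf]]. apply in_map_iff in hf.
    destruct hf as [a [<- ha]]. apply zr_in in ha. destruct (IHk g hg) as [h1 h2].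
    unfold upd. split; intros n hn; destruct (Nat.eqb_spec n k); subst; try lia.
    apply h1; lia. apply h2; lia.
Qed.

Lemma box_complete k f : (forall n, (k <= n)%nat -> f n = 0) ->
  (forall n, (n < k)%nat -> Z.abs (f n - coord c n) <= Z.of_nat R) -> In f (box k).
Proof.
  revert f; induction k; simpl; intros f h1 h2.
  - left. apply functional_extensionality; intros n; symmetry; apply h1; lia.
  - apply in_flat_map. exists (upd f k 0). split.
    + apply IHk; intros n hn; unfold upd; destruct (Nat.eqb_spec n k); try lia.
      all: first [apply h1; lia | apply h2; lia].
    + apply in_map_iff. exists (f k - coord c k). split.
      * apply functional_extensionality; intros n. unfold upd. destruct (Nat.eqb_spec n k); subst; lia.
      * apply zr_in. specialize (h2 k); lia.
Qed.

Lemma box_nodup k : NoDup (box k).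
Proof.
  induction k; simpl. repeat constructor; auto.
  apply NoDup_flat_map'; auto.
  - intros g hg. apply NoDup_map_NoDup_ForallPairs; [|apply zr_nodup].
    intros a b _ _ h. assert (upd g k (coord c k + a) k = upd g k (coord c k + b) k) by (rewrite h; auto).
    unfold upd in H; rewrite Nat.eqb_refl in H; lia.
  - intros g1 g2 b hg1 hg2 hb1 hb2. apply in_map_iff in hb1, hb2.
    destruct hb1 as [a1 [e1 _]], hb2 as [a2 [e2 _]]. subst b.
    destruct (box_in k g1 hg1) as [z1 _]. destruct (box_in k g2 hg2) as [z2 _].
    apply functional_extensionality; intros n.
    destruct (Nat.eqb_spec n k). subst. rewrite z1, z2; auto.
    assert (upd g2 k (coord c k + a2) n = upd g1 k (coord c k + a1) n) by (rewrite e2; auto).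
    unfold upd in H. destruct (Nat.eqb_spec n k); try lia.
Qed.

End Box.

Definition cubel {d} (c : pt d) (R : nat) : list (pt d) := map (mk d) (box c R d).

Lemma cubel_len {d} (c : pt d) R : length (cubel c R) = ((2*R+1)^d)%nat.
Proof. unfold cubel. rewrite length_map. apply box_len. Qed.

Lemma cubel_in {d} (c : pt d) R j : In j (cubel c R) <-> distinf j c <= Z.of_nat R.
Proof.
  unfold cubel. rewrite in_map_iff. split.
  - intros [f [<- hf]]. destruct (box_in c R d f hf) as [_ h2].
    apply distinf_le_iff. lia. intros n hn. rewrite mk_coord; auto.
  - intros h. exists (coord j). split.
    + apply pt_ext. intros n hn. rewrite mk_coord; auto.
    + apply box_complete. intros; apply coord_supp; auto.
      intros n hn. rewrite distinf_le_iff in h by lia. auto.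
Qed.

Lemma cubel_nodup {d} (c : pt d) R : NoDup (cubel c R).
Proof.
  unfold cubel. apply NoDup_map_NoDup_ForallPairs; [|apply box_nodup].
  intros f g hf hg h. destruct (box_in c R d f hf) as [z1 _]. destruct (box_in c R d g hg) as [z2 _].
  apply functional_extensionality; intros n. destruct (Nat.lt_ge_cases n d).
  rewrite <- (mk_coord d f n), <- (mk_coord d g n), h; auto.
  rewrite z1, z2; auto.
Qed.
Open Scope R_scope.

Lemma pw_pos x a : 0 < Rpower x a.
Proof. unfold Rpower; apply exp_pos. Qed.

Lemma pw_anti x y a : 0 < x <= y -> 0 <= a -> Rpower y (- a) <= Rpower x (- a).
Proof.
  intros hx ha. rewrite !Rpower_Ropp. apply Rinv_le_contravar. apply pw_pos.
  apply Rle_Rpower_l; auto.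
Qed.

Lemma pw_mono x y a : 0 < x <= y -> 0 <= a -> Rpower x a <= Rpower y a.
Proof. intros; apply Rle_Rpower_l; auto. Qed.

Lemma pw_split (d : nat) s x : 0 < x -> Rpower x (- (INR d + s)) = / (x ^ d) * Rpower x (- s).
Proof.
  intros hx. rewrite Ropp_plus_distr, Rpower_plus, Rpower_Ropp, Rpower_pow; auto.
Qed.

Lemma pw_mul x y a : 0 < x -> 0 < y -> Rpower (x * y) a = Rpower x a * Rpower y a.
Proof. intros; rewrite Rpower_mult_distr; auto. Qed.

Lemma pw_inv_mul x a : 0 < x -> Rpower x a * Rpower x (- a) = 1.
Proof. intros. rewrite <- Rpower_plus. replace (a + - a) with 0 by ring. apply Rpower_O; auto. Qed.

Definition C0 (d : nat) (s : R) : R := 4 ^ d / (1 - Rpower 2 (- s)).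

Lemma two_pow_neg_lt s : 0 < s -> Rpower 2 (- s) < 1.
Proof.
  intros hs. rewrite <- (Rpower_O 2) by lra. apply Rpower_lt; lra.
Qed.

Lemma C0_pos d s : 0 < s -> 0 < C0 d s.
Proof.
  intros hs. unfold C0. pose proof (two_pow_neg_lt s hs).
  apply Rdiv_lt_0_compat; [apply pow_lt; lra| lra].
Qed.

Lemma C0_eq d s : 0 < s -> 4 ^ d + C0 d s * Rpower 2 (- s) = C0 d s.
Proof.
  intros hs. unfold C0. pose proof (two_pow_neg_lt s hs). field. lra.
Qed.

Section Tail.
Context {d : nat} (s : R) (hs : 0 < s) (i : pt d).

Definition wt (j : pt d) : R := Rpower (IZR (distinf j i)) (- (INR d + s)).

Lemma tail_k k : forall (m : nat) (P : list (pt d)), (1 <= m)%nat -> NoDup P ->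
  (forall j, In j P -> Z.of_nat m <= distinf j i < Z.of_nat (2 ^ k * m))%Z ->
  sumR wt P <= C0 d s * Rpower (INR m) (- s).
Proof.
  induction k as [|k IH]; intros m P hm hP hr.
  - destruct P as [|j P]. rewrite sumR_nil. pose proof (C0_pos d s hs); pose proof (pw_pos (INR m) (-s)).
    apply Rlt_le, Rmult_lt_0_compat; auto.
    specialize (hr j (or_introl eq_refl)). simpl in hr. lia.
  - assert (hm' : 0 < INR m) by (apply lt_0_INR; lia).
    rewrite (sumR_filter wt (fun j => Z.ltb (distinf j i) (Z.of_nat (2 * m)))).
    set (Pn := filter _ P). set (Pf := filter _ P).
    assert (Hn : sumR wt Pn <= 4 ^ d * Rpower (INR m) (- s)).
    { assert (hl : (length Pn <= (4 * m) ^ d)%nat).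
      { transitivity (length (cubel i (2 * m - 1))).
        apply NoDup_incl_length. apply NoDup_filter; auto.
        intros j hj. apply filter_In in hj. destruct hj as [hj1 hj2]. apply Z.ltb_lt in hj2.
        apply cubel_in. lia.
        rewrite cubel_len. apply Nat.pow_le_mono_l. lia. }
      eapply Rle_trans. apply (sumR_const_le _ _ (Rpower (INR m) (- (INR d + s)))).
      { intros j hj. apply filter_In in hj. destruct hj as [hj1 _]. specialize (hr j hj1).
        unfold wt. apply pw_anti. split; auto. rewrite INR_IZR_INZ. apply IZR_le. lia.
        pose proof (pos_INR d); lra. }
      rewrite pw_split; auto.
      apply le_INR in hl. rewrite pow_INR, mult_INR in hl.
      assert (0 < Rpower (INR m) (- s)) by apply pw_pos.
      apply Rle_trans with (((INR 4 * INR m) ^ d) * (/ INR m ^ d * Rpower (INR m) (- s))).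
      apply Rmult_le_compat_r; auto. apply Rmult_le_pos; [apply Rlt_le, Rinv_0_lt_compat, pow_lt; auto| lra].
      rewrite Rpow_mult_distr. replace (INR 4) with 4 by (simpl; lra).
      right. field. apply pow_nonzero; lra. }
    assert (Hf : sumR wt Pf <= C0 d s * Rpower (INR (2 * m)) (- s)).
    { apply IH. lia. apply NoDup_filter; auto.
      intros j hj. apply filter_In in hj. destruct hj as [hj1 hj2]. apply Bool.negb_true_iff, Z.ltb_ge in hj2.
      specialize (hr j hj1). rewrite Nat.pow_succ_r' in hr. replace (2 ^ k * (2 * m))%nat with (2 * 2 ^ k * m)%nat by lia.
      lia. }
    rewrite mult_INR, pw_mul in Hf by (simpl; lra). replace (INR 2) with 2 in Hf by (simpl; lra).
    pose proof (C0_eq d s hs).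
    assert (4 ^ d * Rpower (INR m) (- s) + C0 d s * (Rpower 2 (- s) * Rpower (INR m) (- s)) = C0 d s * Rpower (INR m) (- s)).
    { rewrite <- H at 2. ring. }
    lra.
Qed.

Lemma tail_exists_k (m : nat) (P : list (pt d)) : (1 <= m)%nat ->
  exists k, forall j, In j P -> (distinf j i < Z.of_nat (2 ^ k * m))%Z.
Proof.
  intros hm. induction P as [|a P IH].
  - exists O; simpl; tauto.
  - destruct IH as [k hk]. exists (Nat.max k (Z.to_nat (distinf a i))).
    assert (forall t, (t < 2 ^ t)%nat) by (intros; apply Nat.pow_gt_lin_r; lia).
    intros j [e|hj]; [subst j|].
    + pose proof (distinf_ge0 a i). set (t := Z.to_nat (distinf a i)).
      assert (2 ^ t <= 2 ^ Nat.max k t)%nat by (apply Nat.pow_le_mono_r; lia).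
      specialize (H t). assert (2 ^ Nat.max k t <= 2 ^ Nat.max k t * m)%nat by nia. lia.
    + specialize (hk j hj). assert (2 ^ k <= 2 ^ Nat.max k (Z.to_nat (distinf a i)))%nat by (apply Nat.pow_le_mono_r; lia).
      nia.
Qed.

Lemma tail (m : nat) (P : list (pt d)) : (1 <= m)%nat -> NoDup P ->
  (forall j, In j P -> Z.of_nat m <= distinf j i)%Z ->
  sumR wt P <= C0 d s * Rpower (INR m) (- s).
Proof.
  intros hm hP hr. destruct (tail_exists_k m P hm) as [k hk].
  apply (tail_k k); auto.
Qed.

End Tail.

Lemma tail_J {d} (J : pt d -> pt d -> R) s lam Lam (i : pt d) (m : nat) (P : list (pt d)) :
  0 < s -> 0 < Lam -> JP J s lam Lam -> (1 <= m)%nat -> NoDup P ->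
  (forall j, In j P -> Z.of_nat m <= distinf j i)%Z ->
  sumR (fun j => J i j) P <= Lam * C0 d s * Rpower (INR m) (- s).
Proof.
  intros hs hL hJ hm hP hr. rewrite Rmult_assoc.
  eapply Rle_trans; [|apply Rmult_le_compat_l; [lra| apply (tail s hs i m P hm hP hr)]].
  rewrite <- sumR_scal. apply sumR_le. intros j hj.
  assert (hne : i <> j). { intros e; subst. specialize (hr j hj). rewrite distinf_self in hr. lia. }
  destruct (hJ i j hne) as [_ h2]. eapply Rle_trans; [apply h2|].
  apply Rmult_le_compat_l; [lra|]. unfold wt. apply pw_anti.
  - pose proof (distinf_pos j i (not_eq_sym hne)). split. apply IZR_lt; lia.
    apply IZR_le. rewrite distinf_sym. apply distinf_le_dist1.
  - pose proof (pos_INR d); lra.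
Qed.
Open Scope R_scope.

Lemma sumR_map {A B} (f : B -> R) (g : A -> B) l : sumR f (map g l) = sumR (fun x => f (g x)) l.
Proof. induction l; simpl; auto. rewrite !sumR_cons, IHl; auto. Qed.

Lemma sumR_if {A} (c : A -> bool) (F : A -> R) l :
  sumR (fun x => if c x then F x else 0) l = sumR F (filter c l).
Proof. induction l; simpl; auto. rewrite sumR_cons, IHl. destruct (c a); simpl; rewrite ?sumR_cons; lra. Qed.

Definition peqb {d} (i j : pt d) : bool := if pt_eq_dec i j then true else false.

Lemma sumR_delta {d} (A : list (pt d)) (x : pt d) c : NoDup A ->
  sumR (fun i => if peqb x i then c else 0) A = if in_dec pt_eq_dec x A then c else 0.
Proof.
  induction A as [|a A IH]; intros hA. reflexivity.
  inversion hA; subst. rewrite sumR_cons, IH by auto. unfold peqb.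
  destruct (in_dec pt_eq_dec x (a :: A)) as [h|h];
  destruct (pt_eq_dec x a); destruct (in_dec pt_eq_dec x A); subst; try tauto; try lra.
  destruct h; subst; tauto.
  exfalso; apply h; simpl; auto.
  exfalso; apply h; simpl; auto.
Qed.

Lemma group_eq {d X} (k : X -> pt d) (g : X -> R) (L : list X) (A : list (pt d)) :
  NoDup A -> (forall p, In p L -> ~ In (k p) A -> g p = 0) ->
  sumR g L = sumR (fun i => sumR g (filter (fun p => peqb (k p) i) L)) A.
Proof.
  intros hA. induction L as [|p L IH]; intros hg.
  - simpl. rewrite sumR_nil. transitivity (sumR (fun _ : pt d => 0 * 1) A).
    rewrite (sumR_scal (fun _ => 1) A 0). lra. apply sumR_ext; intros; simpl; lra.
  - rewrite sumR_cons, IH by (intros; apply hg; simpl; auto).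
    simpl. transitivity (sumR (fun i => (if peqb (k p) i then g p else 0) +
       sumR g (filter (fun p0 => peqb (k p0) i) L)) A).
    + rewrite sumR_plus, sumR_delta by auto. destruct (in_dec pt_eq_dec (k p) A); auto.
      rewrite hg; simpl; auto; lra.
    + apply sumR_ext; intros i _. destruct (peqb (k p) i); rewrite ?sumR_cons; lra.
Qed.

Lemma NoDup_list_prod' {A B} (l1 : list A) (l2 : list B) : NoDup l1 -> NoDup l2 -> NoDup (list_prod l1 l2).
Proof.
  intros h1 h2. induction l1 as [|x l1 IH]; simpl. constructor.
  inversion h1; subst. apply NoDup_app; auto.
  - apply NoDup_map_NoDup_ForallPairs; auto. intros a b _ _ e; inversion e; auto.
  - intros [a b] hab hin. apply in_map_iff in hab. destruct hab as [? [e _]]. inversion e; subst.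
    apply in_prod_iff in hin. tauto.
Qed.

Lemma NoDup_map_inj {A B} (f : A -> B) l : (forall x y, f x = f y -> x = y) -> NoDup l -> NoDup (map f l).
Proof. intros h hl. apply NoDup_map_NoDup_ForallPairs; auto. intros x y _ _; apply h. Qed.

Lemma NoDup_snd_filter {d} (L : list (pt d * pt d)) i :
  NoDup L -> NoDup (map snd (filter (fun p => peqb (fst p) i) L)).
Proof.
  intros hL. apply NoDup_map_NoDup_ForallPairs; [|apply NoDup_filter; auto].
  intros [a b] [a' b'] h1 h2 e. apply filter_In in h1, h2. simpl in *. unfold peqb in *.
  destruct (pt_eq_dec a i), (pt_eq_dec a' i); destruct h1 as [_ h1], h2 as [_ h2]; try discriminate. subst; auto.
Qed.

Lemma NoDup_fst_filter {d} (L : list (pt d * pt d)) i :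
  NoDup L -> NoDup (map fst (filter (fun p => peqb (snd p) i) L)).
Proof.
  intros hL. apply NoDup_map_NoDup_ForallPairs; [|apply NoDup_filter; auto].
  intros [a b] [a' b'] h1 h2 e. apply filter_In in h1, h2. simpl in *. unfold peqb in *.
  destruct (pt_eq_dec b i), (pt_eq_dec b' i); destruct h1 as [_ h1], h2 as [_ h2]; try discriminate. subst; auto.
Qed.
Open Scope R_scope.

Definition Aset {d} (u : pt d -> Z) (q : pt d) (r : nat) : list (pt d) :=
  filter (fun i => Z.eqb (u i) (-1)) (cubel q r).

Definition mi {d} (q : pt d) (r : nat) (i : pt d) : nat := (r + 1 - Z.to_nat (distinf i q))%nat.

Lemma Aset_nodup {d} (u : pt d -> Z) q r : NoDup (Aset u q r).
Proof. apply NoDup_filter, cubel_nodup. Qed.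

Lemma Aset_in {d} (u : pt d -> Z) q r i : In i (Aset u q r) <-> u i = (-1)%Z /\ (distinf i q <= Z.of_nat r)%Z.
Proof.
  unfold Aset. rewrite filter_In, cubel_in, Z.eqb_eq. tauto.
Qed.

Lemma far_lemma {d} (u : pt d -> Z) q r i j :
  In i (Aset u q r) -> u j = (-1)%Z -> ~ In j (Aset u q r) ->
  (1 <= mi q r i)%nat /\ (Z.of_nat (mi q r i) <= distinf j i)%Z.
Proof.
  intros hi hj hnj. apply Aset_in in hi. destruct hi as [_ hi].
  assert (hjq : (Z.of_nat r < distinf j q)%Z).
  { destruct (Z.lt_ge_cases (Z.of_nat r) (distinf j q)); auto. exfalso; apply hnj, Aset_in; auto. }
  pose proof (distinf_tri j i q). pose proof (distinf_ge0 i q). unfold mi. split; lia.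
Qed.

Section Min.
Context {d : nat} (J : pt d -> pt d -> R) (s lam Lam : R) (q : pt d) (l : nat) (u : pt d -> Z).
Hypotheses (hJ0 : J_nonneg J) (hJ1 : J1 J) (hJP : JP J s lam Lam) (hs : 0 < s) (hL : 0 < Lam)
  (hu : config u) (hmin : minimizer J (cube l q) u).

Variable r : nat.
Hypothesis hrl : (r <= l)%nat.

Let A := Aset u q r.
Let Y := sumR (fun i => Lam * C0 d s * Rpower (INR (mi q r i)) (- s)) A.
Let inA (i : pt d) : bool := if in_dec pt_eq_dec i A then true else false.
Let v (i : pt d) : Z := if in_dec pt_eq_dec i A then 1%Z else u i.

Lemma v_config : config v.
Proof. intros i. unfold v. destruct (in_dec pt_eq_dec i A); auto. Qed.

Lemma A_in_cube i : In i A -> cube l q i.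
Proof. intros h. apply Aset_in in h. unfold cube. lia. Qed.

Lemma Hterm_nonneg (w : pt d -> Z) p : config w -> 0 <= Hterm J w p.
Proof.
  intros hw. unfold Hterm. destruct (hw (fst p)) as [e1|e1]; destruct (hw (snd p)) as [e2|e2];
  rewrite e1, e2; simpl; pose proof (hJ0 (fst p) (snd p)); nra.
Qed.

Lemma side_bound (k k' : pt d * pt d -> pt d) (Jk : pt d * pt d -> R) (L : list (pt d * pt d))
  (hkey : forall i, NoDup L -> NoDup (map k' (filter (fun p => peqb (k p) i) L)))
  (hJk : forall p, Jk p = J (k p) (k' p)) :
  NoDup L ->
  sumR (fun p => if inA (k p) then (if Z.eqb (v (k' p)) (-1) then 2 * Jk p else 0) else 0) L <= 2 * Y.
Proof.
  intros hnd. rewrite (group_eq k _ L A) by (apply Aset_nodup || (intros p _ hp; unfold inA; destruct (in_dec pt_eq_dec (k p) A); tauto)).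
  unfold Y. rewrite <- sumR_scal. apply sumR_le. intros i hi.
  transitivity (sumR (fun b => if Z.eqb (v b) (-1) then 2 * J i b else 0) (map k' (filter (fun p => peqb (k p) i) L))).
  - rewrite sumR_map. right. apply sumR_ext. intros p hp. apply filter_In in hp. destruct hp as [_ hp].
    unfold peqb in hp. destruct (pt_eq_dec (k p) i) as [e|]; try discriminate.
    unfold inA. rewrite e. destruct (in_dec pt_eq_dec i A); try tauto. rewrite hJk, e. reflexivity.
  - rewrite sumR_if, sumR_scal. apply Rmult_le_compat_l; [lra|].
    assert (hfar : forall b, In b (filter (fun b => Z.eqb (v b) (-1)) (map k' (filter (fun p => peqb (k p) i) L))) ->
       (1 <= mi q r i)%nat /\ (Z.of_nat (mi q r i) <= distinf b i)%Z).
    { intros b hb. apply filter_In in hb. destruct hb as [_ hb]. apply Z.eqb_eq in hb. unfold v in hb.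
      destruct (in_dec pt_eq_dec b A); try discriminate. apply (far_lemma u q r i b); auto. }
    apply tail_J with lam; auto.
    + apply Aset_in in hi. unfold mi. lia.
    + apply NoDup_filter; auto.
    + intros b hb; apply hfar; auto.
Qed.

Variable P1 : list (pt d).
Hypotheses (hP1 : NoDup P1) (hP1u : forall j, In j P1 -> u j = 1%Z).
Let X := sumR (fun i => sumR (fun j => J i j) P1) A.

Definition swp (p : pt d * pt d) : pt d * pt d := (snd p, fst p).

Let K := list_prod A P1 ++ map swp (list_prod A P1).

Lemma A_u i : In i A -> u i = (-1)%Z.
Proof. intros h; apply Aset_in in h; tauto. Qed.

Lemma K_nodup : NoDup K.
Proof.
  unfold K. pose proof (NoDup_list_prod' A P1 (Aset_nodup u q r) hP1).
  apply NoDup_app; auto.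
  - apply NoDup_map_inj; auto. intros [a b] [a' b'] e; inversion e; auto.
  - intros [a b] h1 h2. apply in_map_iff in h2. destruct h2 as [[a' b'] [e h2]].
    inversion e; subst. apply in_prod_iff in h1, h2.
    destruct h1 as [h1 _], h2 as [_ h2]. apply A_u in h1. rewrite hP1u in h1 by auto. discriminate.
Qed.

Lemma K_touch p : In p K -> In (fst p) A \/ In (snd p) A.
Proof.
  unfold K; intros h. apply in_app_or in h. destruct h as [h|h].
  - destruct p; apply in_prod_iff in h; simpl; tauto.
  - apply in_map_iff in h. destruct h as [[a b] [<- h]]. apply in_prod_iff in h; simpl; tauto.
Qed.

Lemma K_sum : sumR (Hterm J u) K = 4 * X.
Proof.
  unfold K, X. transitivity (sumR (fun i => sumR (fun j => 4 * J i j) P1) A).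
  - rewrite sumR_app, sumR_map, !sumR_prod, <- sumR_plus. apply sumR_ext; intros i hi.
    rewrite <- sumR_plus. apply sumR_ext; intros j hj.
    unfold Hterm, swp; simpl. rewrite (A_u i hi), (hP1u j hj). rewrite (hJ1 j i). simpl. lra.
  - rewrite <- sumR_scal. apply sumR_ext; intros. rewrite sumR_scal; reflexivity.
Qed.

Lemma key_bound (Su : R) (HSu : H_value J (cube l q) u Su) lst :
  NoDup lst -> Forall (Hindex (cube l q)) lst ->
  sumR (Hterm J v) lst <= Su - 4 * X + 4 * Y.
Proof.
  intros hnd hfa.
  set (touch := fun p : pt d * pt d => orb (inA (fst p)) (inA (snd p))).
  rewrite (sumR_filter _ touch lst).
  set (lin := filter touch lst). set (lout := filter (fun p => negb (touch p)) lst).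
  assert (E1 : sumR (Hterm J v) lout = sumR (Hterm J u) lout).
  { apply sumR_ext. intros p hp. apply filter_In in hp. destruct hp as [_ hp].
    unfold touch, inA in hp. unfold Hterm, v.
    destruct (in_dec pt_eq_dec (fst p) A), (in_dec pt_eq_dec (snd p) A); simpl in hp; try discriminate.
    reflexivity. }
  assert (E2 : sumR (Hterm J u) lout + 4 * X <= Su).
  { rewrite <- K_sum, <- sumR_app. destruct HSu as [HSu _]. apply HSu.
    exists (lout ++ K). split; [|split]; auto.
    - apply NoDup_app. apply NoDup_filter; auto. apply K_nodup.
      intros p hp hk. apply filter_In in hp. destruct hp as [_ hp]. apply K_touch in hk.
      unfold touch, inA in hp. destruct (in_dec pt_eq_dec (fst p) A), (in_dec pt_eq_dec (snd p) A);
        simpl in hp; try discriminate; tauto.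
    - apply Forall_app. split.
      + apply Forall_forall. intros p hp. apply filter_In in hp. rewrite Forall_forall in hfa. apply hfa; tauto.
      + apply Forall_forall. intros p hp. apply K_touch in hp. unfold Hindex.
        destruct hp; [left|right]; apply A_in_cube; auto. }
  assert (E3 : sumR (Hterm J v) lin <= 4 * Y).
  { set (f1 := fun p : pt d * pt d => if inA (fst p) then (if Z.eqb (v (snd p)) (-1) then 2 * J (fst p) (snd p) else 0) else 0).
    set (f2 := fun p : pt d * pt d => if inA (snd p) then (if Z.eqb (v (fst p)) (-1) then 2 * J (snd p) (fst p) else 0) else 0).
    assert (hlnd : NoDup lin) by (apply NoDup_filter; auto).
    assert (B1 : sumR f1 lin <= 2 * Y).
    { apply (side_bound fst snd (fun p => J (fst p) (snd p))); auto. intros i h; apply NoDup_snd_filter; auto. }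
    assert (B2 : sumR f2 lin <= 2 * Y).
    { apply (side_bound snd fst (fun p => J (snd p) (fst p))); auto. intros i h; apply NoDup_fst_filter; auto. }
    assert (sumR (Hterm J v) lin <= sumR (fun p => f1 p + f2 p) lin).
    { apply sumR_le. intros p hp. apply filter_In in hp. destruct hp as [_ hp].
      unfold f1, f2, touch in *. unfold Hterm.
      pose proof (hJ0 (fst p) (snd p)). rewrite (hJ1 (snd p) (fst p)).
      assert (hv : forall i, inA i = true -> v i = 1%Z).
      { intros i h. unfold inA, v in *. destruct (in_dec pt_eq_dec i A); try discriminate; auto. }
      destruct (inA (fst p)) eqn:e1; destruct (inA (snd p)) eqn:e2; simpl in hp; try discriminate;
      repeat match goal with h : inA _ = true |- _ => rewrite (hv _ h); clear h end;
      destruct (v_config (fst p)) as [w1|w1]; destruct (v_config (snd p)) as [w2|w2];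
      rewrite ?w1, ?w2; simpl; lra. }
    rewrite sumR_plus in H. lra. }
  rewrite E1 in *. lra.
Qed.

Lemma min_key : X <= Y.
Proof.
  destruct hmin as [Su [HSu Hm]].
  set (Ev := fun x => exists lst : list (pt d * pt d), NoDup lst /\ Forall (Hindex (cube l q)) lst /\
             x = fold_right Rplus 0 (map (Hterm J v) lst)).
  assert (hb : is_upper_bound Ev (Su - 4 * X + 4 * Y)).
  { intros x [lst [h1 [h2 ->]]]. apply (key_bound Su HSu lst h1 h2). }
  destruct (completeness Ev) as [Sv HSv].
  { exists (Su - 4 * X + 4 * Y); auto. }
  { exists 0. exists []. repeat split; auto. constructor. }
  assert (Su <= Sv).
  { apply (Hm v v_config); auto. intros i hi. unfold v. destruct (in_dec pt_eq_dec i A); auto.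
    exfalso; apply hi, A_in_cube; auto. }
  destruct HSv as [_ HSv]. specialize (HSv _ hb). lra.
Qed.

End Min.
Open Scope R_scope.

Lemma filter_len_split {A} (f : A -> bool) l :
  length l = (length (filter f l) + length (filter (fun x => negb (f x)) l))%nat.
Proof. induction l; simpl; auto. destruct (f a); simpl; lia. Qed.

Definition Yr {d} (s Lam : R) (q : pt d) (u : pt d -> Z) (r : nat) : R :=
  sumR (fun i => Lam * C0 d s * Rpower (INR (mi q r i)) (- s)) (Aset u q r).

Definition Vr {d} (u : pt d -> Z) (q : pt d) (r : nat) : nat := length (Aset u q r).

Lemma Yr_nonneg {d} s Lam (q : pt d) u r : 0 < s -> 0 < Lam -> 0 <= Yr s Lam q u r.
Proof.
  intros. apply sumR_nonneg. intros. pose proof (C0_pos d s H). pose proof (pw_pos (INR (mi q r x)) (-s)).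
  apply Rlt_le. apply Rmult_lt_0_compat; [apply Rmult_lt_0_compat|]; auto.
Qed.

Section Scale.
Context {d : nat} (J : pt d -> pt d -> R) (s lam Lam : R) (q : pt d) (l : nat) (u : pt d -> Z).
Hypotheses (hJ0 : J_nonneg J) (hJ1 : J1 J) (hJP : JP J s lam Lam) (hs : 0 < s) (hlam : 0 < lam) (hL : 0 < Lam)
  (hu : config u) (hmin : minimizer J (cube l q) u).

Lemma scale_ineq (r R : nat) : (r <= l)%nat -> (1 <= R)%nat -> (1 <= d)%nat ->
  INR (Vr u q r) * (INR (2 * R + 1) ^ d - INR (Vr u q r)) * (lam * Rpower (INR d * INR R) (- (INR d + s)))
  <= 2 * Yr s Lam q u r.
Proof.
  intros hrl hR hd.
  set (A := Aset u q r).
  set (nA := fun j : pt d => if in_dec pt_eq_dec j A then false else true).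
  set (P := filter nA (cubel q (r + R))).
  set (g := lam * Rpower (INR d * INR R) (- (INR d + s))).
  assert (hPnd : NoDup P) by (apply NoDup_filter, cubel_nodup).
  assert (Hup : sumR (fun i => sumR (fun j => J i j) P) A <= 2 * Yr s Lam q u r).
  { transitivity (sumR (fun i => sumR (fun j => J i j) (filter (fun j => Z.eqb (u j) 1) P)) A +
                  sumR (fun i => sumR (fun j => J i j) (filter (fun j => negb (Z.eqb (u j) 1)) P)) A).
    - rewrite <- sumR_plus. right. apply sumR_ext; intros. apply sumR_filter.
    - assert (H1 : sumR (fun i => sumR (fun j => J i j) (filter (fun j => Z.eqb (u j) 1) P)) A <= Yr s Lam q u r).
      { apply (min_key J s lam Lam q l u); auto. apply NoDup_filter; auto.
        intros j hj. apply filter_In in hj. apply Z.eqb_eq; tauto. }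
      assert (H2 : sumR (fun i => sumR (fun j => J i j) (filter (fun j => negb (Z.eqb (u j) 1)) P)) A <= Yr s Lam q u r).
      { unfold Yr. apply sumR_le. intros i hi. apply tail_J with lam; auto.
        + apply Aset_in in hi. unfold mi. lia.
        + apply NoDup_filter; auto.
        + intros j hj. apply filter_In in hj. destruct hj as [hj1 hj2].
          apply filter_In in hj1. destruct hj1 as [_ hj1].
          assert (u j = (-1)%Z). { destruct (hu j) as [e|e]; auto. rewrite e in hj2; discriminate. }
          assert (~ In j A). { unfold nA in hj1. destruct (in_dec pt_eq_dec j A); auto; discriminate. }
          apply (far_lemma u q r i j); auto. }
      lra. }
  assert (Hlow : forall i, In i A -> (INR (2 * R + 1) ^ d - INR (Vr u q r)) * g <= sumR (fun j => J i j) P).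
  { intros i hi.
    set (Ci := filter nA (cubel i R)).
    assert (hlen : (INR (2 * R + 1) ^ d - INR (Vr u q r)) <= INR (length Ci)).
    { rewrite <- pow_INR. rewrite <- (cubel_len i R). rewrite (filter_len_split (fun j => negb (nA j))).
      assert (length (filter (fun j => negb (nA j)) (cubel i R)) <= Vr u q r)%nat.
      { apply NoDup_incl_length. apply NoDup_filter, cubel_nodup.
        intros j hj. apply filter_In in hj. destruct hj as [_ hj]. unfold nA in hj.
        destruct (in_dec pt_eq_dec j A); auto; discriminate. }
      assert (filter (fun x => negb (negb (nA x))) (cubel i R) = Ci).
      { unfold Ci. apply filter_ext. intros; apply Bool.negb_involutive. }
      rewrite H0. rewrite plus_INR. apply le_INR in H. lra. }
    assert (hg : 0 <= g) by (unfold g; pose proof (pw_pos (INR d * INR R) (- (INR d + s))); apply Rmult_le_pos; lra).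
    apply Rle_trans with (INR (length Ci) * g). apply Rmult_le_compat_r; auto.
    apply Rle_trans with (sumR (fun j => J i j) Ci).
    - apply sumR_const_ge. intros j hj. apply filter_In in hj. destruct hj as [hj1 hj2].
      apply cubel_in in hj1.
      assert (hne : i <> j). { intros e; subst. unfold nA in hj2. destruct (in_dec pt_eq_dec j A); try discriminate; tauto. }
      destruct (hJP i j hne) as [h1 _]. eapply Rle_trans; [|apply h1]. unfold g.
      apply Rmult_le_compat_l; [lra|]. apply pw_anti.
      + pose proof (distinf_pos j i (not_eq_sym hne)). pose proof (distinf_le_dist1 i j). pose proof (distinf_sym i j).
        split. apply IZR_lt. lia.
        rewrite <- mult_INR, INR_IZR_INZ. apply IZR_le. pose proof (dist1_le i j).
        rewrite distinf_sym in hj1. nia.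
      + pose proof (pos_INR d); lra.
    - apply sumR_sub.
      + apply NoDup_filter, cubel_nodup.
      + intros j hj. apply filter_In in hj. destruct hj as [hj1 hj2]. apply filter_In. split; auto.
        apply cubel_in in hj1. apply cubel_in. apply Aset_in in hi. pose proof (distinf_tri j i q). lia.
      + intros; apply hJ0. }
  eapply Rle_trans; [|apply Hup].
  apply Rle_trans with (sumR (fun _ => (INR (2 * R + 1) ^ d - INR (Vr u q r)) * g) A).
  - apply Rle_trans with (INR (length A) * ((INR (2 * R + 1) ^ d - INR (Vr u q r)) * g)).
    + right. unfold Vr, g. fold A. ring.
    + apply sumR_const_ge. intros; lra.
  - apply sumR_le; auto.
Qed.

End Scale.
Open Scope R_scope.

Section G.
Variable s : R.
Hypothesis hs : 0 < s < 1.

Definition G (n : nat) : R := sumR (fun t => Rpower (INR t) (- s)) (seq 1 n).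

Lemma G_S n : G (S n) = G n + Rpower (INR (S n)) (- s).
Proof. unfold G. rewrite seq_S, sumR_app, sumR_cons, sumR_nil. replace (1 + n)%nat with (S n) by lia. ring. Qed.

Lemma G_mono n m : (n <= m)%nat -> G n <= G m.
Proof.
  induction 1. lra. rewrite G_S. pose proof (pw_pos (INR (S m)) (- s)). lra.
Qed.

Lemma F_bound (rho a n : nat) :
  sumR (fun r => if Nat.leb rho r then Rpower (INR (r + 1 - rho)) (- s) else 0) (seq a n) <= G (a + n - rho).
Proof.
  induction n as [|n IH].
  - simpl seq. rewrite sumR_nil. unfold G. apply sumR_nonneg. intros; apply Rlt_le, pw_pos.
  - rewrite seq_S, sumR_app, sumR_cons, sumR_nil.
    destruct (Nat.leb_spec rho (a + n)).
    + replace (a + S n - rho)%nat with (S (a + n - rho)) by lia. rewrite G_S.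
      replace (a + n + 1 - rho)%nat with (S (a + n - rho)) by lia. lra.
    + assert (G (a + n - rho) <= G (a + S n - rho)) by (apply G_mono; lia). lra.
Qed.

Lemma G_shift n b : (1 <= n)%nat -> G (n + b) <= G n + INR b * Rpower (INR n) (- s).
Proof.
  intros hn. induction b as [|b IH].
  - rewrite Nat.add_0_r. change (INR 0) with 0. lra.
  - rewrite Nat.add_succ_r, G_S. rewrite (S_INR b).
    assert (Rpower (INR (S (n + b))) (- s) <= Rpower (INR n) (- s)).
    { apply pw_anti; [|lra]. split. apply lt_0_INR; lia. apply le_INR; lia. }
    lra.
Qed.

Definition aa : R := Rpower 2 (1 - s).
Definition C2 : R := aa / (aa - 1).

Lemma aa_gt1 : 1 < aa.
Proof. unfold aa. assert (Rpower 2 0 < Rpower 2 (1 - s)) by (apply Rpower_lt; lra). rewrite Rpower_O in H by lra. lra. Qed.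

Lemma C2_pos : 0 < C2.
Proof. unfold C2. pose proof aa_gt1. apply Rdiv_lt_0_compat; lra. Qed.

Lemma pw_one a : Rpower 1 a = 1.
Proof. unfold Rpower. rewrite ln_1, Rmult_0_r. apply exp_0. Qed.

Lemma G_dyadic k : G (2 ^ k) <= C2 * Rpower (INR (2 ^ k)) (1 - s).
Proof.
  pose proof aa_gt1. pose proof C2_pos.
  assert (hC : 1 <= C2). { unfold C2. apply (Rmult_le_reg_r (aa - 1)); [lra|]. field_simplify; lra. }
  induction k as [|k IH].
  - simpl. unfold G; simpl. rewrite sumR_cons, sumR_nil, !pw_one. lra.
  - assert (hp : 0 < INR (2 ^ k)) by (apply lt_0_INR, Nat.neq_0_lt_0, Nat.pow_nonzero; lia).
    replace (2 ^ S k)%nat with (2 ^ k + 2 ^ k)%nat by (simpl; lia).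
    eapply Rle_trans. apply G_shift. pose proof (Nat.pow_nonzero 2 k); lia.
    assert (E : INR (2 ^ k) * Rpower (INR (2 ^ k)) (- s) = Rpower (INR (2 ^ k)) (1 - s)).
    { unfold Rminus. rewrite Rpower_plus, Rpower_1; auto. }
    rewrite E. rewrite plus_INR.
    replace (INR (2 ^ k) + INR (2 ^ k)) with (2 * INR (2 ^ k)) by ring.
    rewrite pw_mul by lra. fold aa.
    pose proof (pw_pos (INR (2 ^ k)) (1 - s)).
    assert (C2 + 1 <= C2 * aa).
    { unfold C2. apply (Rmult_le_reg_r (aa - 1)); [lra|]. field_simplify; try lra. nra. }
    nra.
Qed.

End G.
Open Scope R_scope.

Lemma Vr_mono {d} (u : pt d -> Z) q r r' : (r <= r')%nat -> (Vr u q r <= Vr u q r')%nat.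
Proof.
  intros h. apply NoDup_incl_length. apply Aset_nodup.
  intros i hi. apply Aset_in in hi. apply Aset_in. lia.
Qed.

Lemma sumY {d} s Lam (q : pt d) (u : pt d -> Z) (M : nat) : 0 < s < 1 -> 0 < Lam ->
  sumR (fun r => Yr s Lam q u r) (seq M M) <= Lam * C0 d s * INR (Vr u q (M + M)) * G s (M + M).
Proof.
  intros hs hL. set (B := Aset u q (M + M)).
  set (rho := fun i : pt d => Z.to_nat (distinf i q)).
  pose proof (C0_pos d s (proj1 hs)).
  apply Rle_trans with (sumR (fun r => sumR (fun i => Lam * C0 d s *
      (if Nat.leb (rho i) r then Rpower (INR (r + 1 - rho i)) (- s) else 0)) B) (seq M M)).
  - apply sumR_le. intros r hr. apply in_seq in hr. unfold Yr.
    apply Rle_trans with (sumR (fun i => Lam * C0 d s * Rpower (INR (mi q r i)) (- s))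
                            (filter (fun i => Nat.leb (rho i) r) B)).
    + apply sumR_sub. apply Aset_nodup.
      * intros i hi. apply Aset_in in hi. apply filter_In. split.
        apply Aset_in. lia. apply Nat.leb_le. unfold rho. lia.
      * intros. pose proof (pw_pos (INR (mi q r x)) (- s)).
        apply Rlt_le, Rmult_lt_0_compat; [apply Rmult_lt_0_compat|]; auto.
    + rewrite <- sumR_if. right. apply sumR_ext. intros i _.
      destruct (Nat.leb (rho i) r); [unfold mi, rho; reflexivity| ring].
  - rewrite sumR_exchange.
    apply Rle_trans with (sumR (fun _ => Lam * C0 d s * G s (M + M)) B).
    + apply sumR_le. intros i hi. rewrite sumR_scal. apply Rmult_le_compat_l.
      apply Rlt_le, Rmult_lt_0_compat; auto.
      eapply Rle_trans. apply F_bound. apply G_mono. lia.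
    + eapply Rle_trans. apply sumR_const_le. intros; apply Rle_refl. unfold Vr; fold B. right; ring.
Qed.
Open Scope R_scope.

Lemma chooseR (d W : nat) : (1 <= d)%nat -> (1 <= W)%nat ->
  exists R, (1 <= R)%nat /\ (2 * W <= (2 * R + 1) ^ d)%nat /\ (R ^ d <= 2 * W)%nat.
Proof.
  intros hd hW.
  assert (H : forall N, (1 <= N)%nat -> (2 * W <= (2 * N + 1) ^ d)%nat ->
     exists R, (1 <= R)%nat /\ (2 * W <= (2 * R + 1) ^ d)%nat /\ (R ^ d <= 2 * W)%nat).
  { induction N as [|N IH]; intros h1 h2. lia.
    destruct (Nat.eq_dec N 0) as [e|e].
    - subst. exists 1%nat. split; auto. split; auto. rewrite Nat.pow_1_l. lia.
    - destruct (Nat.le_gt_cases (2 * W) ((2 * N + 1) ^ d)) as [h|h].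
      + apply IH; auto. lia.
      + exists (S N). split; [lia|split; auto].
        assert (S N ^ d <= (2 * N + 1) ^ d)%nat by (apply Nat.pow_le_mono_l; lia). lia. }
  apply (H (2 * W)%nat). lia.
  assert (2 * (2 * W) + 1 <= (2 * (2 * W) + 1) ^ d)%nat.
  { set (X := (2 * (2 * W) + 1)%nat). destruct d. lia. rewrite Nat.pow_succ_r'.
    assert (1 <= X ^ d)%nat by (apply Nat.neq_0_lt_0, Nat.pow_nonzero; unfold X; lia). nia. }
  lia.
Qed.

Definition cd (d : nat) : R := (2 / INR d) ^ d / INR d.
Definition Kp (d : nat) (s Lam : R) : R := 8 * Lam * C0 d s * C2 s.

Lemma cd_pos d : (1 <= d)%nat -> 0 < cd d.
Proof.
  intros h. assert (0 < INR d) by (apply lt_0_INR; lia). unfold cd.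
  apply Rdiv_lt_0_compat; auto. apply pow_lt. apply Rdiv_lt_0_compat; lra.
Qed.

Lemma Tg_bound (d R : nat) s lam : (1 <= d)%nat -> (1 <= R)%nat -> 0 < s < 1 -> 0 < lam ->
  lam * cd d * Rpower (INR R) (- s) <= INR (2 * R + 1) ^ d * (lam * Rpower (INR d * INR R) (- (INR d + s))).
Proof.
  intros hd hR hs hl.
  assert (hd' : 1 <= INR d) by (apply (le_INR 1); lia).
  assert (hR' : 1 <= INR R) by (apply (le_INR 1); lia).
  rewrite pw_split by nra. rewrite pw_mul by lra.
  assert (h1 : / INR d <= Rpower (INR d) (- s)).
  { rewrite <- Rpower_1 with (x := INR d) at 1 by lra. rewrite <- Rpower_Ropp.
    apply Rle_Rpower; lra. }
  assert (h2 : (2 * INR R) ^ d <= INR (2 * R + 1) ^ d).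
  { apply pow_incr. split. lra. rewrite plus_INR, mult_INR. simpl. lra. }
  pose proof (pw_pos (INR R) (- s)).
  assert (hx : 0 < (INR d * INR R) ^ d) by (apply pow_lt; nra).
  apply Rle_trans with ((2 * INR R) ^ d * (lam * (/ (INR d * INR R) ^ d * (/ INR d * Rpower (INR R) (- s))))).
  - right. unfold cd. rewrite !Rpow_mult_distr. unfold Rdiv. rewrite Rpow_mult_distr, pow_inv. field.
    repeat split; try apply pow_nonzero; lra.
  - apply Rmult_le_compat; try lra.
    + apply pow_le; lra.
    + apply Rmult_le_pos; [lra|]. apply Rmult_le_pos. apply Rlt_le, Rinv_0_lt_compat; auto.
      apply Rmult_le_pos; [apply Rlt_le, Rinv_0_lt_compat; lra| lra].
    + apply Rmult_le_compat_l; [lra|]. apply Rmult_le_compat_l. apply Rlt_le, Rinv_0_lt_compat; auto.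
      apply Rmult_le_compat_r; lra.
Qed.

Section Step.
Context {d : nat} (J : pt d -> pt d -> R) (s lam Lam : R) (q : pt d) (l : nat) (u : pt d -> Z).
Hypotheses (hJ0 : J_nonneg J) (hJ1 : J1 J) (hJP : JP J s lam Lam) (hs : 0 < s < 1) (hlam : 0 < lam) (hL : lam <= Lam)
  (hu : config u) (hmin : minimizer J (cube l q) u) (hd : (1 <= d)%nat).

Lemma main_ineq (M R : nat) : (1 <= M)%nat -> (M + M <= l)%nat -> (1 <= R)%nat ->
  (2 * Vr u q (M + M) <= (2 * R + 1) ^ d)%nat ->
  G s (M + M) <= C2 s * (2 * INR M) * Rpower (INR M) (- s) ->
  INR (Vr u q M) * lam * cd d * Rpower (INR R) (- s) <=
  Kp d s Lam * INR (Vr u q (M + M)) * Rpower (INR M) (- s).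
Proof.
  intros hM hMl hR hTn hG.
  set (T := INR (2 * R + 1) ^ d).
  set (g := lam * Rpower (INR d * INR R) (- (INR d + s))).
  set (V := INR (Vr u q M)). set (W := INR (Vr u q (M + M))).
  assert (hg : 0 <= g) by (unfold g; pose proof (pw_pos (INR d * INR R) (- (INR d + s))); apply Rmult_le_pos; lra).
  assert (hT : 2 * W <= T).
  { unfold T, W. rewrite <- pow_INR. replace 2 with (INR 2) by (simpl; lra). rewrite <- mult_INR. apply le_INR; auto. }
  assert (hV0 : 0 <= V) by apply pos_INR.
  assert (hW0' : 0 <= W) by apply pos_INR.
  assert (hA : INR M * (V * (T / 2) * g) <= 2 * (Lam * C0 d s * W * G s (M + M))).
  { apply Rle_trans with (sumR (fun r => INR (Vr u q r) * (T - INR (Vr u q r)) * g) (seq M M)).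
    - rewrite <- (length_seq M M) at 1. apply sumR_const_ge. intros r hr. apply in_seq in hr.
      assert (V <= INR (Vr u q r)) by (apply le_INR, Vr_mono; lia).
      assert (INR (Vr u q r) <= W) by (apply le_INR, Vr_mono; lia).
      apply Rmult_le_compat_r; auto. apply Rmult_le_compat; lra.
    - apply Rle_trans with (sumR (fun r => 2 * Yr s Lam q u r) (seq M M)).
      + apply sumR_le. intros r hr. apply in_seq in hr. apply (scale_ineq J s lam Lam q l u); auto; try lia; try lra.
      + rewrite sumR_scal. apply Rmult_le_compat_l; [lra|]. apply sumY; auto; lra. }
  pose proof (Tg_bound d R s lam hd hR hs hlam) as hTg. fold T g in hTg.
  assert (hM' : 1 <= INR M) by (apply (le_INR 1); lia).
  pose proof (C0_pos d s (proj1 hs)). pose proof (C2_pos s hs).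
  pose proof (pw_pos (INR M) (- s)). pose proof (pw_pos (INR R) (- s)).
  assert (hW0 : 0 <= W) by apply pos_INR.
  assert (h1 : INR M * V * (lam * cd d * Rpower (INR R) (- s)) / 2 <= INR M * (V * (T / 2) * g)).
  { assert (0 <= INR M * V) by nra. 
    replace (INR M * (V * (T / 2) * g)) with (INR M * V * (T * g) / 2) by field. 
    apply Rmult_le_compat_r. lra. apply Rmult_le_compat_l; auto. }
  assert (h2 : 2 * (Lam * C0 d s * W * G s (M + M)) <= 2 * (Lam * C0 d s * W * (C2 s * (2 * INR M) * Rpower (INR M) (- s)))).
  { apply Rmult_le_compat_l; [lra|]. apply Rmult_le_compat_l; auto. apply Rmult_le_pos; [|auto]. nra. }
  assert (h3 : INR M * (V * lam * cd d * Rpower (INR R) (- s)) <= INR M * (Kp d s Lam * W * Rpower (INR M) (- s))).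
  { unfold Kp. apply Rmult_le_reg_r with (/ 2). lra.
    replace (INR M * (V * lam * cd d * Rpower (INR R) (- s)) * / 2) with (INR M * V * (lam * cd d * Rpower (INR R) (- s)) / 2) by (unfold Rdiv; ring).
    replace (INR M * (8 * Lam * C0 d s * C2 s * W * Rpower (INR M) (- s)) * / 2) with
      (2 * (Lam * C0 d s * W * (C2 s * (2 * INR M) * Rpower (INR M) (- s)))) by field.
    lra. }
  apply Rmult_le_reg_l in h3; lra.
Qed.

End Step.

Lemma pw_root (d : nat) x s : (1 <= d)%nat -> 0 < x -> Rpower x s = Rpower (x ^ d) (s / INR d).
Proof.
  intros hd hx. assert (0 < INR d) by (apply lt_0_INR; lia).
  rewrite <- Rpower_pow by auto. rewrite Rpower_mult. f_equal. field. lra.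
Qed.

Definition theta (d : nat) (s lam Lam : R) : R := cd d * lam / (Kp d s Lam * 2 ^ (2 * d + 1)).
Definition delta (d : nat) (s lam Lam : R) : R := Rmin 1 (Rpower (theta d s lam Lam) (INR d / s)).

Lemma Kp_pos d s Lam : 0 < s < 1 -> 0 < Lam -> 0 < Kp d s Lam.
Proof.
  intros hs hL. unfold Kp. pose proof (C0_pos d s (proj1 hs)). pose proof (C2_pos s hs).
  apply Rmult_lt_0_compat; [apply Rmult_lt_0_compat; [apply Rmult_lt_0_compat|]|]; lra.
Qed.

Lemma theta_pos d s lam Lam : (1 <= d)%nat -> 0 < s < 1 -> 0 < lam -> 0 < Lam -> 0 < theta d s lam Lam.
Proof.
  intros. unfold theta. pose proof (cd_pos d H). pose proof (Kp_pos d s Lam H0 H2).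
  apply Rdiv_lt_0_compat. nra. apply Rmult_lt_0_compat; auto. apply pow_lt; lra.
Qed.

Lemma delta_pos d s lam Lam : (1 <= d)%nat -> 0 < s < 1 -> 0 < lam -> 0 < Lam -> 0 < delta d s lam Lam.
Proof. intros. unfold delta. apply Rmin_case. lra. apply pw_pos. Qed.

Lemma delta_le1 d s lam Lam : delta d s lam Lam <= 1.
Proof. unfold delta. apply Rmin_l. Qed.

Lemma delta_pow d s lam Lam : (1 <= d)%nat -> 0 < s < 1 -> 0 < lam -> 0 < Lam ->
  Rpower (delta d s lam Lam) (s / INR d) <= theta d s lam Lam.
Proof.
  intros. assert (0 < INR d) by (apply lt_0_INR; lia).
  pose proof (delta_pos d s lam Lam H H0 H1 H2).
  apply Rle_trans with (Rpower (Rpower (theta d s lam Lam) (INR d / s)) (s / INR d)).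
  - apply pw_mono. split; auto. apply Rmin_r. apply Rlt_le, Rdiv_lt_0_compat; lra.
  - rewrite Rpower_mult. replace (INR d / s * (s / INR d)) with 1 by (field; lra).
    rewrite Rpower_1. lra. apply theta_pos; auto.
Qed.

Section Step2.
Context {d : nat} (J : pt d -> pt d -> R) (s lam Lam : R) (q : pt d) (l : nat) (u : pt d -> Z).
Hypotheses (hJ0 : J_nonneg J) (hJ1 : J1 J) (hJP : JP J s lam Lam) (hs : 0 < s < 1) (hlam : 0 < lam) (hL : lam <= Lam)
  (hu : config u) (hmin : minimizer J (cube l q) u) (hd : (1 <= d)%nat).

Lemma step (k : nat) : (2 ^ S k <= l)%nat -> (1 <= Vr u q 1)%nat ->
  delta d s lam Lam * INR (2 ^ k) ^ d <= INR (Vr u q (2 ^ k)) ->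
  delta d s lam Lam * INR (2 ^ S k) ^ d <= INR (Vr u q (2 ^ S k)).
Proof.
  intros hkl hV1 IH.
  set (M := (2 ^ k)%nat) in *.
  assert (hM : (1 <= M)%nat) by (unfold M; apply Nat.neq_0_lt_0, Nat.pow_nonzero; lia).
  assert (e2 : (2 ^ S k = M + M)%nat) by (unfold M; simpl; lia).
  rewrite e2 in *.
  assert (hW1 : (1 <= Vr u q (M + M))%nat) by (eapply Nat.le_trans; [apply hV1| apply Vr_mono; lia]).
  destruct (chooseR d (Vr u q (M + M)) hd hW1) as [R [hR [hT hRd]]].
  assert (hM' : 1 <= INR M) by (apply (le_INR 1); lia).
  assert (hR' : 1 <= INR R) by (apply (le_INR 1); lia).
  assert (hG : G s (M + M) <= C2 s * (2 * INR M) * Rpower (INR M) (- s)).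
  { pose proof (G_dyadic s hs (S k)). rewrite e2 in H. eapply Rle_trans; [apply H|].
    rewrite Rmult_assoc. apply Rmult_le_compat_l. apply Rlt_le, C2_pos; auto.
    rewrite plus_INR. replace (INR M + INR M) with (2 * INR M) by ring.
    unfold Rminus. rewrite Rpower_plus, Rpower_1 by lra. apply Rmult_le_compat_l. lra.
    apply pw_anti. lra. lra. }
  pose proof (main_ineq J s lam Lam q l u hJ0 hJ1 hJP hs hlam hL hu hmin hd M R hM ltac:(lia) hR hT hG) as hmain.
  set (V := INR (Vr u q M)) in *. set (W := INR (Vr u q (M + M))) in *.
  set (dl := delta d s lam Lam) in *.
  assert (hLam : 0 < Lam) by lra.
  pose proof (delta_pos d s lam Lam hd hs hlam hLam) as hdl. fold dl in hdl.
  pose proof (delta_pow d s lam Lam hd hs hlam hLam) as hdp. fold dl in hdp.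
  pose proof (theta_pos d s lam Lam hd hs hlam hLam) as hth.
  pose proof (Kp_pos d s Lam hs hLam) as hK.
  pose proof (cd_pos d hd) as hcd.
  assert (hdr : 0 < INR d) by (apply lt_0_INR; lia).
  destruct (Rle_lt_dec (dl * INR (M + M) ^ d) W) as [ok|bad]; auto.
  exfalso.
  rewrite plus_INR in bad. replace (INR M + INR M) with (2 * INR M) in bad by ring.
  rewrite Rpow_mult_distr in bad.
  assert (hRW : INR R ^ d <= 2 * W).
  { unfold W. rewrite <- pow_INR. replace 2 with (INR 2) by (simpl; lra). rewrite <- mult_INR. apply le_INR; auto. }
  assert (hMd : 0 < INR M ^ d) by (apply pow_lt; lra).
  assert (h2d : 0 < 2 ^ d) by (apply pow_lt; lra).
  assert (hRs : Rpower (INR R) s <= 2 ^ (d + 1) * theta d s lam Lam * Rpower (INR M) s).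
  { rewrite (pw_root d (INR R) s) by (auto; lra).
    rewrite (pw_root d (INR M) s) by (auto; lra).
    assert (hsd : 0 <= s / INR d) by (apply Rlt_le, Rdiv_lt_0_compat; lra).
    apply Rle_trans with (Rpower (2 ^ (d + 1) * dl * INR M ^ d) (s / INR d)).
    - apply pw_mono; auto. split. apply pow_lt; lra.
      rewrite pow_add. nra.
    - assert (0 < 2 ^ (d + 1)) by (apply pow_lt; lra).
      rewrite !pw_mul by (try apply Rmult_lt_0_compat; auto).
      assert (Rpower (2 ^ (d + 1)) (s / INR d) <= 2 ^ (d + 1)).
      { rewrite <- (Rpower_1 (2 ^ (d + 1))) at 2 by auto. apply Rle_Rpower.
        apply pow_R1_Rle; lra. apply Rmult_le_reg_r with (INR d); auto. field_simplify; try lra.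
        assert (1 <= INR d) by (apply (le_INR 1); lia). lra. }
      pose proof (pw_pos (2 ^ (d + 1)) (s / INR d)). pose proof (pw_pos dl (s / INR d)).
      pose proof (pw_pos (INR M ^ d) (s / INR d)).
      apply Rmult_le_compat_r; [lra|]. apply Rmult_le_compat; lra. }
  pose proof (pw_inv_mul (INR R) s ltac:(lra)) as eR.
  pose proof (pw_inv_mul (INR M) s ltac:(lra)) as eM.
  pose proof (pw_pos (INR R) s). pose proof (pw_pos (INR M) s).
  pose proof (pw_pos (INR R) (- s)). pose proof (pw_pos (INR M) (- s)).
  assert (h1 : V * lam * cd d <= Kp d s Lam * W * Rpower (INR M) (- s) * Rpower (INR R) s).
  { apply Rmult_le_compat_r with (r := Rpower (INR R) s) in hmain; [|lra].
    replace (V * lam * cd d * Rpower (INR R) (- s) * Rpower (INR R) s) with (V * lam * cd d * (Rpower (INR R) s * Rpower (INR R) (- s))) in hmain by ring.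
    rewrite eR in hmain. lra. }
  assert (h2 : Kp d s Lam * W * Rpower (INR M) (- s) * Rpower (INR R) s <
               Kp d s Lam * (dl * (2 ^ d * INR M ^ d)) * Rpower (INR M) (- s) * (2 ^ (d + 1) * theta d s lam Lam * Rpower (INR M) s)).
  { apply Rle_lt_trans with (Kp d s Lam * W * Rpower (INR M) (- s) * (2 ^ (d + 1) * theta d s lam Lam * Rpower (INR M) s)).
    - apply Rmult_le_compat_l; auto. apply Rmult_le_pos; [|lra]. apply Rmult_le_pos; [lra|]. apply pos_INR.
    - apply Rmult_lt_compat_r. apply Rmult_lt_0_compat; [|lra]. apply Rmult_lt_0_compat; [apply pow_lt|]; lra.
      apply Rmult_lt_compat_r; auto. apply Rmult_lt_compat_l; auto. }
  assert (h3 : Kp d s Lam * (dl * (2 ^ d * INR M ^ d)) * Rpower (INR M) (- s) * (2 ^ (d + 1) * theta d s lam Lam * Rpower (INR M) s)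
               = cd d * lam * dl * INR M ^ d).
  { replace (Kp d s Lam * (dl * (2 ^ d * INR M ^ d)) * Rpower (INR M) (- s) * (2 ^ (d + 1) * theta d s lam Lam * Rpower (INR M) s))
      with (Kp d s Lam * 2 ^ (2 * d + 1) * theta d s lam Lam * dl * INR M ^ d * (Rpower (INR M) s * Rpower (INR M) (- s))).
    rewrite eM. unfold theta. field. split. apply pow_nonzero; lra. lra.
    rewrite !pow_add. replace (2 * d)%nat with (d + d)%nat by lia. rewrite pow_add. ring. }
  assert (h4 : cd d * lam * dl * INR M ^ d <= V * lam * cd d).
  { replace (V * lam * cd d) with (cd d * lam * V) by ring. replace (cd d * lam * dl * INR M ^ d) with (cd d * lam * (dl * INR M ^ d)) by ring. apply Rmult_le_compat_l. nra. lra. }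
  lra.
Qed.

End Step2.
Open Scope R_scope.

Lemma card_Vr {d} (u : pt d -> Z) q l n :
  card_is (fun i => u i = (-1)%Z /\ cube l q i) n -> n = Vr u q l.
Proof.
  intros [L [hnd [hin hlen]]]. subst n. unfold Vr.
  assert (hiff : forall x, In x L <-> In x (Aset u q l)).
  { intros x. rewrite hin, Aset_in. unfold cube. tauto. }
  apply Nat.le_antisymm; apply NoDup_incl_length; auto using Aset_nodup; intros x hx; apply hiff; auto.
Qed.

Section Dens.
Context {d : nat} (J : pt d -> pt d -> R) (s lam Lam : R) (q : pt d) (l : nat) (u : pt d -> Z).
Hypotheses (hJ0 : J_nonneg J) (hJ1 : J1 J) (hJP : JP J s lam Lam) (hs : 0 < s < 1) (hlam : 0 < lam) (hL : lam <= Lam)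
  (hu : config u) (hmin : minimizer J (cube l q) u) (hd : (1 <= d)%nat).

Lemma density : (1 <= Vr u q 1)%nat ->
  forall n, card_is (fun i => u i = (-1)%Z /\ cube l q i) n ->
  delta d s lam Lam / 2 ^ d * INR l ^ d <= INR n.
Proof.
  intros hV1 n hc. apply card_Vr in hc. subst n.
  set (dl := delta d s lam Lam).
  assert (hLam : 0 < Lam) by lra.
  pose proof (delta_pos d s lam Lam hd hs hlam hLam) as hdl. fold dl in hdl.
  pose proof (delta_le1 d s lam Lam) as hdl1. fold dl in hdl1.
  destruct (Nat.eq_dec l 0) as [e|e].
  - subst l. simpl INR. rewrite pow_i by lia. rewrite Rmult_0_r. apply pos_INR.
  - set (k := Nat.log2 l).
    destruct (Nat.log2_spec l) as [hk1 hk2]; [lia|]. fold k in hk1, hk2.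
    assert (hall : forall j, (j <= k)%nat -> dl * INR (2 ^ j) ^ d <= INR (Vr u q (2 ^ j))).
    { induction j as [|j IH]; intros hj.
      - simpl. rewrite pow1. apply le_INR in hV1. simpl in hV1. lra.
      - apply (step J s lam Lam q l u); auto.
        + assert (2 ^ S j <= 2 ^ k)%nat by (apply Nat.pow_le_mono_r; lia). lia.
        + apply IH; lia. }
    specialize (hall k (le_n k)).
    assert (hV : INR (Vr u q (2 ^ k)) <= INR (Vr u q l)) by (apply le_INR, Vr_mono; lia).
    assert (hl : INR l ^ d <= 2 ^ d * INR (2 ^ k) ^ d).
    { rewrite <- Rpow_mult_distr. apply pow_incr. split. apply pos_INR.
      replace 2 with (INR 2) by (simpl; lra). rewrite <- mult_INR. apply le_INR.
      rewrite Nat.pow_succ_r' in hk2. lia. }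
    assert (h2d : 0 < 2 ^ d) by (apply pow_lt; lra).
    apply Rle_trans with (dl * INR (2 ^ k) ^ d); [|lra].
    unfold Rdiv. rewrite Rmult_assoc. apply Rmult_le_compat_l; [lra|].
    apply Rmult_le_reg_l with (2 ^ d); auto. field_simplify; [|lra]. lra.
Qed.

End Dens.
Open Scope R_scope.

Lemma Hterm_neg {d} (J : pt d -> pt d -> R) (w : pt d -> Z) : Hterm J (fun i => (- w i)%Z) = Hterm J w.
Proof.
  apply functional_extensionality; intros p. unfold Hterm. rewrite Z.mul_opp_opp. reflexivity.
Qed.

Lemma minimizer_neg {d} (J : pt d -> pt d -> R) G (u : pt d -> Z) :
  minimizer J G u -> minimizer J G (fun i => (- u i)%Z).
Proof.
  intros [Su [HSu Hm]]. exists Su. split.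
  - unfold H_value in *. rewrite Hterm_neg. auto.
  - intros v hv hag Sv HSv. apply (Hm (fun i => (- v i)%Z)).
    + intros i; destruct (hv i) as [e|e]; rewrite e; auto.
    + intros i hi. rewrite hag by auto. lia.
    + unfold H_value in *. rewrite Hterm_neg. auto.
Qed.

Lemma Vr1 {d} (u : pt d -> Z) q j : u j = (-1)%Z -> (distinf j q <= 1)%Z -> (1 <= Vr u q 1)%nat.
Proof.
  intros h1 h2. assert (In j (Aset u q 1)) by (apply Aset_in; split; auto).
  unfold Vr. destruct (Aset u q 1); simpl in *; [contradiction| lia].
Qed.

Theorem mainTheorem12 :
  forall (d : nat) (s lam Lam : R),
    (2 <= d)%nat -> 0 < s < 1 -> 0 < lam -> lam <= Lam ->
    exists cbar : R, 0 < cbar /\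
      forall (J : pt d -> pt d -> R) (q : pt d) (l : nat) (u : pt d -> Z),
        J_nonneg J -> J1 J -> J2 J -> J5 J -> JP J s lam Lam ->
        config u ->
        minimizer J (cube l q) u ->
        in_boundary u q ->
        (forall n, card_is (fun i => u i = (-1)%Z /\ cube l q i) n -> cbar * INR l ^ d <= INR n) /\
        (forall n, card_is (fun i => u i = 1%Z /\ cube l q i) n -> cbar * INR l ^ d <= INR n).
Proof.
  intros d s lam Lam hd hs hlam hL.
  assert (hd1 : (1 <= d)%nat) by lia.
  exists (delta d s lam Lam / 2 ^ d). split.
  { apply Rdiv_lt_0_compat. apply delta_pos; auto; lra. apply pow_lt; lra. }
  intros J q l u hJ0 hJ1 hJ2 hJ5 hJP hu hmin [hq [j [hj1 hj2]]]. split.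
  - apply (density J s lam Lam q l u); auto.
    apply (Vr1 u q j); auto. rewrite distinf_sym. rewrite <- hj1. apply distinf_le_dist1.
  - intros n hc.
    apply (density J s lam Lam q l (fun i => (- u i)%Z)); auto.
    + intros i; destruct (hu i) as [e|e]; rewrite e; auto.
    + apply minimizer_neg; auto.
    + apply (Vr1 _ q q). rewrite hq; reflexivity. rewrite distinf_self; lia.
    + destruct hc as [L [h1 [h2 h3]]]. exists L. split; auto. split; auto.
      intros x. rewrite h2. split; intros [a b]; split; auto; lia.
Qed.
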